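(* Let $D\ge 1$ be an integer and let $Q_D$ be the $D$-dimensional hypercube with vertex set $X=\{0,1\}^D$ and adjacency matrix $A$. The matrices $I,\alpha_1,\alpha_2,\ldots,\alpha_D$ form a basis for the space of symmetric $A$-like matrices of $Q_D$. In particular, this space has dimension $D+1$.
   Context: $Q_D$ is the graph with vertex set $X=\{0,1\}^D$ (sequences $x=(x_1,\ldots,x_D)$ with $x_i\in\{0,1\}$), two vertices being adjacent iff they differ in exactly one coordinate. $\mathrm{Mat}_X(\mathbb{R})$ denotes the real matrices with rows and columns indexed by $X$; $A$ is the adjacency matrix of $Q_D$ and $I$ the identity. A matrix $B\in\mathrm{Mat}_X(\mathbb{R})$ is called $A$-like if (i) $BA=AB$ and (ii) $B_{xy}=0$ for all $x,y\in X$ that are neither equal nor adjacent. For $1\le i\le D$, two vertices are $i$-adjacent if they differ in the $i$-th coordinate and agree in all others, and $\alpha_i\in\mathrm{Mat}_X(\mathbb{R})$ has $(x,y)$-entry $1$ if $x,y$ are $i$-adjacent and $0$ otherwise. *)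

(* Defs.v *)
From HB Require Import structures.
From mathcomp Require Import all_boot all_order all_algebra.
Set Implicit Arguments. Unset Strict Implicit. Unset Printing Implicit Defensive.
Import Order.TTheory GRing.Theory Num.Theory.
Local Open Scope ring_scope.

Definition cube (D : nat) : finType := {ffun 'I_D -> bool}.

(* Mat_X(R): square matrices whose rows/columns are indexed by X, via the
   canonical enumeration of the finite type X (enum_rank / enum_val). *)
Definition matX (R : nzRingType) (D : nat) := 'M[R]_#|cube D|.

Definition entry (R : nzRingType) (D : nat) (B : matX R D) (x y : cube D) : R :=
  B (enum_rank x) (enum_rank y).

Definition matX_of (R : nzRingType) (D : nat) (f : cube D -> cube D -> R) : matX R D :=
  \matrix_(a, b) f (enum_val a) (enum_val b).

Definition adjacent (D : nat) (x y : cube D) : bool :=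
  #|[set i : 'I_D | x i != y i]| == 1%N.

Definition iadjacent (D : nat) (i : 'I_D) (x y : cube D) : bool :=
  (x i != y i) && [forall j : 'I_D, (j != i) ==> (x j == y j)].

Definition adjA (R : nzRingType) (D : nat) : matX R D :=
  matX_of (fun x y => (adjacent x y)%:R).

Definition alpha (R : nzRingType) (D : nat) (i : 'I_D) : matX R D :=
  matX_of (fun x y => (iadjacent i x y)%:R).

Definition A_like (R : nzRingType) (D : nat) (B : matX R D) : bool :=
  (B *m adjA R D == adjA R D *m B) &&
  [forall x : cube D, forall y : cube D,
     ((x != y) && ~~ adjacent x y) ==> (entry B x y == 0)].

(* Symmetry uses MathComp's own qualifier [symmetricmx] (B \is symmetricmx <-> B = B^T). *)

(* The family I, alpha_1, ..., alpha_D, indexed by 'I_D.+1 (index 0 is I). *)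
Definition cube_family_fun (R : nzRingType) (D : nat) (k : 'I_D.+1) : matX R D :=
  match unlift ord0 k with
  | Some i => @alpha R D i
  | None => 1%:M
  end.

Definition cube_family (R : nzRingType) (D : nat) : (D.+1).-tuple (matX R D) :=
  [tuple @cube_family_fun R D k | k < D.+1].

(* Main.v *)
Require Import Defs.
From HB Require Import structures.
From mathcomp Require Import all_boot all_order all_algebra.
From mathcomp Require Import ring lra.
Set Implicit Arguments. Unset Strict Implicit. Unset Printing Implicit Defensive.
Import Order.TTheory GRing.Theory Num.Theory.
Local Open Scope ring_scope.

Section S.
Variable R : realFieldType.
Variable D : nat.
Local Notation X := (cube D).
Local Notation M := (matX R D).

Lemma matX_eq (B C : M) : (forall x y, entry B x y = entry C x y) -> B = C.
Proof.
move=> H; apply/matrixP=> a b.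
by have := H (enum_val a) (enum_val b); rewrite /entry !enum_valK.
Qed.

Lemma entry_matX (f : X -> X -> R) x y : entry (matX_of f) x y = f x y.
Proof. by rewrite /entry /matX_of mxE !enum_rankK. Qed.

Lemma entryD (B C : M) x y : entry (B + C) x y = entry B x y + entry C x y.
Proof. by rewrite /entry mxE. Qed.

Lemma entryZ c (B : M) x y : entry (c *: B) x y = c * entry B x y.
Proof. by rewrite /entry mxE. Qed.

Lemma entry0 x y : entry (0 : M) x y = 0.
Proof. by rewrite /entry mxE. Qed.

Lemma entry_sum I (r : seq I) (P : pred I) (F : I -> M) x y :
  entry (\sum_(i <- r | P i) F i) x y = \sum_(i <- r | P i) entry (F i) x y.
Proof. by rewrite /entry summxE. Qed.

Lemma entry1 x y : entry (1%:M : M) x y = (x == y)%:R.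
Proof. by rewrite /entry mxE (inj_eq enum_rank_inj). Qed.

Lemma entryM (B C : M) x y :
  entry (B *m C) x y = \sum_(z : X) entry B x z * entry C z y.
Proof.
rewrite /entry mxE (reindex enum_rank) //.
by apply: onW_bij; apply: enum_rank_bij.
Qed.

Lemma symP (B : M) : reflect (forall x y, entry B x y = entry B y x) (B \is symmetricmx).
Proof.
rewrite is_hermitianmxE; apply: (iffP eqP) => [E x y | H].
  by rewrite {1}E /entry !mxE expr0 mul1r.
apply/matX_eq => x y; rewrite /entry !mxE expr0 mul1r; exact: H.
Qed.


Definition flip (x : X) (i : 'I_D) : X := [ffun j => if j == i then ~~ x j else x j].

Lemma flipK x i : flip (flip x i) i = x.
Proof. by apply/ffunP => j; rewrite !ffunE; case: eqP => // _; rewrite negbK. Qed.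

Lemma flipC x i j : flip (flip x i) j = flip (flip x j) i.
Proof. by apply/ffunP => m; rewrite !ffunE; case: (m == i); case: (m == j). Qed.

Lemma flip_idx x i j : (flip x i == flip x j) = (i == j).
Proof.
apply/eqP/eqP => [/ffunP/(_ i) | -> //].
by rewrite !ffunE eqxx; case: eqP => // _; case: (x i).
Qed.

Lemma flip_neq x i : (x == flip x i) = false.
Proof. by apply/eqP => /ffunP/(_ i); rewrite ffunE eqxx; case: (x i). Qed.

Lemma iadjE i x y : iadjacent i x y = (y == flip x i).
Proof.
apply/andP/eqP => [[H1 /forallP H2] | ->].
  apply/ffunP => j; rewrite ffunE; case: eqVneq => [->|ji].
    by move: H1; case: (x i); case: (y i).
  by have := H2 j; rewrite ji /= => /eqP.
split; first by rewrite ffunE eqxx; case: (x i).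
by apply/forallP => j; apply/implyP => ji; rewrite ffunE (negbTE ji).
Qed.

Lemma flip_set x y i : (y == flip x i) = ([set j | x j != y j] == [set i]).
Proof.
apply/eqP/eqP => [-> | H].
  by apply/setP => j; rewrite !inE ffunE; case: (j == i); case: (x j).
apply/ffunP => j; have := congr1 (fun S : {set (ordinal D)} => j \in S) H; rewrite /=; rewrite !inE ffunE.
by case: (j == i); case: (x j); case: (y j).
Qed.

Lemma sum_delta (T : finType) (a : T) (F : T -> R) :
  \sum_t (a == t)%:R * F t = F a.
Proof.
rewrite (bigD1 a) //= eqxx mul1r big1 ?addr0 // => t /negbTE.
by rewrite eq_sym => ->; rewrite mul0r.
Qed.

Lemma adjE x y : (adjacent x y)%:R = \sum_i (y == flip x i)%:R :> R.
Proof.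
rewrite /adjacent; under eq_bigr do rewrite flip_set.
case: cards1P => [[i0 ->] | H].
  transitivity (\sum_i (i0 == i)%:R * (1 : R)); last first.
    by apply: eq_bigr => i _; rewrite mulr1 (inj_eq (@set1_inj _)).
  by rewrite sum_delta.
rewrite big1 // => i _; case: eqP => // E; case: H; by exists i.
Qed.

Lemma adjP x y : reflect (exists i, y = flip x i) (adjacent x y).
Proof.
apply: (iffP idP) => [H | [i ->]].
  have : (adjacent x y)%:R != 0 :> R by rewrite H oner_neq0.
  rewrite adjE; case: (pickP (fun i => y == flip x i)) => [i /eqP E _ | H0].
    by exists i.
  by rewrite big1 ?eqxx // => i _; rewrite H0.
have : (adjacent x (flip x i))%:R = 1 :> R.
  rewrite adjE; transitivity (\sum_j (i == j)%:R * (1 : R)); last first.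
    by rewrite sum_delta.
  by apply: eq_bigr => j _; rewrite flip_idx eq_sym mulr1.
by case: (adjacent _ _) => //= /eqP; rewrite eq_sym oner_eq0.
Qed.

Definition sgn (x : X) : R := \prod_j (if x j then -1 else 1).

Lemma sgn_flip x i : sgn (flip x i) = - sgn x.
Proof.
rewrite /sgn (bigD1 i) //= [in RHS](bigD1 i) //= ffunE eqxx -mulNr.
congr (_ * _); last by apply: eq_bigr => j ji; rewrite ffunE (negbTE ji).
by case: (x i); rewrite ?opprK.
Qed.

Lemma sgn_neq0 x : sgn x != 0.
Proof. by apply/prodf_neq0 => j _; case: (x j); rewrite ?oppr_eq0 oner_eq0. Qed.

Lemma parity x i j k : (flip (flip x i) j == flip x k) = false.
Proof.
apply/eqP => /(congr1 sgn); rewrite !sgn_flip opprK => /eqP.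
rewrite -subr_eq0 opprK -mulr2n mulrn_eq0 /= (negbTE (sgn_neq0 x)) /=; done.
Qed.

Lemma parity0 x i : (flip x i == x) = false.
Proof. by rewrite eq_sym flip_neq. Qed.


Lemma flip_eqE y i z : (flip y i == z) = (y == flip z i).
Proof. by apply/eqP/eqP => [<- | ->]; rewrite flipK. Qed.

Lemma flip2 x i j l k : i != j ->
  (flip (flip x l) k == flip (flip x i) j) = ((l == i) && (k == j)) || ((l == j) && (k == i)).
Proof.
move=> ij; apply/idP/idP; last first.
  by case/orP => /andP[/eqP -> /eqP ->]; rewrite // flipC.
move/eqP/ffunP => H.
have H' m : (m == l) (+) (m == k) = (m == i) (+) (m == j).
  move: (H m); rewrite !ffunE.
  by case: (m == k); case: (m == l); case: (m == i); case: (m == j); case: (x m).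
have Hi := H' i; have Hj := H' j.
move: Hi Hj; rewrite eqxx.
case: (eqVneq l i) => [-> | li].
  rewrite eqxx /= => _; rewrite [j == i]eq_sym (negbTE ij) /= => /eqP ->.
  by rewrite eqxx.
rewrite (negbTE ij) /= => /eqP ik.
rewrite -ik [j == i]eq_sym (negbTE ij) eqxx addbF addbT /= => /eqP ->.
by rewrite !eqxx.
Qed.

Lemma sum_delta' (T : finType) (a : T) (F : T -> R) :
  \sum_t F t * (a == t)%:R = F a.
Proof. by rewrite -(sum_delta a F); apply: eq_bigr => t _; rewrite mulrC. Qed.

Lemma entry_alpha i x y : entry (alpha R i) x y = (y == flip x i)%:R.
Proof. by rewrite entry_matX iadjE. Qed.

Lemma entry_adj x y : entry (adjA R D) x y = \sum_j (y == flip x j)%:R.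
Proof. by rewrite entry_matX adjE. Qed.

Lemma alphaM i (N : M) x y : entry (alpha R i *m N) x y = entry N (flip x i) y.
Proof.
rewrite entryM -(sum_delta (flip x i) (fun z => entry N z y)).
by apply: eq_bigr => z _; rewrite entry_alpha eq_sym.
Qed.

Lemma Malpha i (N : M) x y : entry (N *m alpha R i) x y = entry N x (flip y i).
Proof.
rewrite entryM -(sum_delta' (flip y i) (fun z => entry N x z)).
by apply: eq_bigr => z _; rewrite entry_alpha flip_eqE.
Qed.

Lemma alpha_adj i : alpha R i *m adjA R D = adjA R D *m alpha R i.
Proof.
apply/matX_eq => x y; rewrite alphaM Malpha !entry_adj.
by apply: eq_bigr => j _; rewrite flip_eqE flipC.
Qed.


Definition x0 : X := [ffun => false].

Lemma flip_const (f : X -> R) : (forall x k, f (flip x k) = f x) -> forall x, f x = f x0.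
Proof.
move=> Hf x.
have Hn n : f [ffun j : 'I_D => (j < n)%N && x j] = f x0.
  elim: n => [|n IH].
    by congr f; apply/ffunP => j; rewrite !ffunE.
  case: (ltnP n D) => [hn | hn].
    pose i := Ordinal hn.
    have E : [ffun j : 'I_D => (j < n.+1)%N && x j] =
       if x i then flip [ffun j : 'I_D => (j < n)%N && x j] i
       else [ffun j : 'I_D => (j < n)%N && x j].
      apply/ffunP => j; case xi: (x i); rewrite !ffunE ltnS leq_eqVlt;
      case: (eqVneq j i) => [-> | ji] /=; rewrite ?ltnn ?xi ?eqxx //;
      have ji' : (nat_of_ord j == n) = false := negbTE ji; by rewrite ji'.
    by rewrite E; case: (x i); rewrite ?Hf.
  rewrite -IH; congr f; apply/ffunP => j; rewrite !ffunE.
  have h1 : (j < n)%N := leq_trans (ltn_ord j) hn.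
  by rewrite h1 (ltn_trans h1 (ltnSn _)).
rewrite -(Hn D); congr f; apply/ffunP => j; by rewrite !ffunE ltn_ord.
Qed.


Definition Pm (B : M) := [/\ forall x y, entry B x y = entry B y x,
   B *m adjA R D = adjA R D *m B &
   forall x y, x != y -> ~~ adjacent x y -> entry B x y = 0].

Lemma PmE (B : M) : (B \is symmetricmx) && A_like B <-> Pm B.
Proof.
split.
  case/andP => /symP S /andP[/eqP C /forallP Z]; split => // x y xy nxy.
  by have /forallP/(_ y) := Z x; rewrite xy nxy /= => /eqP.
case=> S C Z; apply/andP; split; first exact/symP.
apply/andP; split; first exact/eqP.
apply/forallP => x; apply/forallP => y; apply/implyP => /andP[xy nxy].
by rewrite Z.
Qed.

Lemma Pm0 : Pm 0.
Proof. by split => *; rewrite ?entry0 ?mul0mx ?mulmx0. Qed.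

Lemma PmD B C : Pm B -> Pm C -> Pm (B + C).
Proof.
case=> S1 C1 Z1 [S2 C2 Z2]; split => [x y | | x y xy nxy].
- by rewrite !entryD S1 S2.
- by rewrite mulmxDl mulmxDr C1 C2.
- by rewrite entryD Z1 ?Z2 ?addr0.
Qed.

Lemma PmZ c B : Pm B -> Pm (c *: B).
Proof.
case=> S1 C1 Z1; split => [x y | | x y xy nxy].
- by rewrite !entryZ S1.
- by rewrite -scalemxAl -scalemxAr C1.
- by rewrite entryZ Z1 ?mulr0.
Qed.

Lemma Pm1 : Pm 1%:M.
Proof.
split => [x y | | x y xy nxy].
- by rewrite !entry1 eq_sym.
- by rewrite mul1mx mulmx1.
- by rewrite entry1 (negbTE xy).
Qed.

Lemma Pmalpha i : Pm (alpha R i).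
Proof.
split => [x y | | x y xy nxy].
- by rewrite !entry_alpha -flip_eqE eq_sym.
- exact: alpha_adj.
- rewrite entry_alpha; case: eqP => // E; case/negP: nxy; apply/adjP.
  by exists i.
Qed.

Lemma famE (k : 'I_D.+1) : cube_family_fun R k = match unlift ord0 k with Some i => alpha R i | None => (1%:M : M) end.
Proof. rewrite /cube_family_fun. by case: (unlift _ _). Qed.

Lemma Pmfam (k : 'I_D.+1) : Pm (cube_family_fun R k).
Proof. rewrite famE; case: (unlift _ _) => [i|]; [exact: Pmalpha | exact: Pm1]. Qed.

Lemma fam_nth (k : 'I_D.+1) : (cube_family R D)`_k = cube_family_fun R k.
Proof. by rewrite -tnth_nth tnth_mktuple. Qed.


Lemma adj_sum x (h : X -> R) : \sum_w entry (adjA R D) x w * h w = \sum_j h (flip x j).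
Proof.
under eq_bigr do rewrite entry_adj mulr_suml.
rewrite exchange_big /=; apply: eq_bigr => j _.
by rewrite -(sum_delta (flip x j) h); apply: eq_bigr => w _; rewrite eq_sym.
Qed.

Section Fwd.
Variable B : M.
Hypothesis PB : Pm B.
Local Notation b := (entry B).

Lemma P1 x w : b x w = b x x * (x == w)%:R + \sum_i b x (flip x i) * (flip x i == w)%:R.
Proof.
case: PB => S C Z.
case: (eqVneq x w) => [<- | xw].
  rewrite mulr1 big1 ?addr0 // => i _; by rewrite parity0 mulr0.
rewrite mulr0 add0r; case: (boolP (adjacent x w)) => [/adjP [i ->] | nxw].
  transitivity (\sum_j b x (flip x j) * (i == j)%:R); first by rewrite sum_delta'.
  by apply: eq_bigr => j _; rewrite flip_idx eq_sym.
rewrite Z // big1 // => i _; case: eqP => [E|]; last by rewrite mulr0.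
by case/negP: nxw; apply/adjP; exists i.
Qed.

Lemma P1s x (g : X -> R) :
  \sum_w b x w * g w = b x x * g x + \sum_i b x (flip x i) * g (flip x i).
Proof.
under eq_bigr do rewrite P1 mulrDl mulr_suml.
rewrite big_split /=; congr (_ + _).
  transitivity (\sum_w (x == w)%:R * (b x x * g w)).
    by apply: eq_bigr => w _; ring.
  exact: (sum_delta x (fun w => b x x * g w)).
rewrite exchange_big /=; apply: eq_bigr => i _.
transitivity (\sum_w (flip x i == w)%:R * (b x (flip x i) * g w)).
  by apply: eq_bigr => w _; ring.
exact: (sum_delta (flip x i) (fun w => b x (flip x i) * g w)).
Qed.

Lemma diag_flip x k : b (flip x k) (flip x k) = b x x.
Proof.
case: PB => S C Z.
have := congr1 (fun N => entry N x (flip x k)) C; rewrite /= !entryM.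
rewrite adj_sum P1s.
rewrite entry_adj.
have -> : \sum_i ((flip x k) == flip x i)%:R = 1 :> R.
  transitivity (\sum_i (k == i)%:R * (1 : R)); last by rewrite sum_delta.
  by apply: eq_bigr => i _; rewrite flip_idx mulr1 eq_sym.
rewrite mulr1 big1 ?addr0; last first.
  move=> i _; rewrite entry_adj big1 ?mulr0 // => j _.
  by rewrite eq_sym parity.
move=> ->; rewrite (bigD1 k) //= big1 ?addr0 // => j jk.
rewrite Z //; first by rewrite flip_idx.
apply/negP => /adjP [m /eqP]; by rewrite eq_sym parity.
Qed.

Lemma sum_ind (T : finType) (a : T) : \sum_t (t == a)%:R = 1 :> R.
Proof.
transitivity (\sum_t (a == t)%:R * (1 : R)); last exact: sum_delta.
by apply: eq_bigr => t _; rewrite mulr1 eq_sym.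
Qed.

Lemma edge_eq x i j : i != j -> b x (flip x i) + b x (flip x j) =
  b (flip x i) (flip (flip x i) j) + b (flip x j) (flip (flip x j) i).
Proof.
move=> ij; case: PB => S C Z.
have := congr1 (fun N => entry N x (flip (flip x i) j)) C; rewrite /= !entryM adj_sum P1s.
rewrite entry_adj big1 ?mulr0 ?add0r; last by move=> m _; rewrite parity.
have E l : entry (adjA R D) (flip x l) (flip (flip x i) j) = (i == l)%:R + (j == l)%:R.
  rewrite entry_adj; under eq_bigr do rewrite eq_sym flip2 //.
  case: (eqVneq l i) => [-> | li].
    rewrite [j == i]eq_sym (negbTE ij) addr0 /=; under eq_bigr do rewrite orbF; exact: sum_ind.
  case: (eqVneq l j) => [E | lj].
    subst l; rewrite add0r /=; exact: sum_ind.
  by rewrite /= big1 ?addr0.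
under eq_bigr do rewrite E mulrDr.
rewrite big_split /= !sum_delta' => ->.
rewrite (bigD1 i) //= (bigD1 j) /=; last by rewrite eq_sym.
rewrite big1 ?addr0; first by rewrite [flip (flip x i) j]flipC.
move=> k /andP [ki kj]; rewrite Z //; first by rewrite eq_sym parity.
apply/negP => /adjP [m /eqP]; rewrite eq_sym flip2 //.
by rewrite (negbTE ki) (negbTE kj).
Qed.

Lemma c_flip x i k : b (flip x k) (flip (flip x k) i) = b x (flip x i).
Proof.
have [S _ _] := PB.
case: (eqVneq k i) => [-> | ki]; first by rewrite flipK S.
have ik : i != k by rewrite eq_sym.
have E1 := edge_eq x ik.
have E2 := edge_eq (flip x k) ik.
have h1 : b (flip x k) (flip (flip x k) k) = b x (flip x k) by rewrite flipK S.
have h2 : b (flip (flip x k) k) (flip (flip (flip x k) k) i) = b x (flip x i) by rewrite flipK.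
have h3 : b (flip (flip x k) i) (flip (flip (flip x k) i) k) = b (flip x i) (flip (flip x i) k).
  by rewrite [flip (flip x k) i]flipC flipK S.
rewrite h1 h2 h3 in E2; lra.
Qed.

Lemma B_repr : B = b x0 x0 *: (1%:M : M) + \sum_i b x0 (flip x0 i) *: alpha R i.
Proof.
apply/matX_eq => x y.
rewrite entryD entryZ entry1 entry_sum P1.
have -> : b x x = b x0 x0.
  exact: (@flip_const (fun z => b z z) (fun z k => diag_flip z k) x).
congr (_ + _); apply: eq_bigr => i _.
rewrite entryZ entry_alpha eq_sym; congr (_ * _).
exact: (@flip_const (fun z => b z (flip z i)) (fun z k => c_flip z i k) x).
Qed.

End Fwd.

Lemma fam_entry_sum (k : 'I_D.+1 -> R) x y :
  entry (\sum_l k l *: cube_family_fun R l) x y =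
  k ord0 * (x == y)%:R + \sum_m k (lift ord0 m) * (y == flip x m)%:R.
Proof.
rewrite entry_sum big_ord_recl entryZ famE unlift_none entry1; congr (_ + _).
by apply: eq_bigr => m _; rewrite entryZ famE liftK entry_alpha.
Qed.

Lemma fam_in1 : (1%:M : M) \in cube_family R D.
Proof. by apply/tnthP; exists ord0; rewrite tnth_mktuple famE unlift_none. Qed.

Lemma fam_inA i : alpha R i \in cube_family R D.
Proof. by apply/tnthP; exists (lift ord0 i); rewrite tnth_mktuple famE liftK. Qed.

End S.

Theorem corollary8p4 (R : realFieldType) (D : nat) (hD : (1 <= D)%N) :
  [/\ free (cube_family R D),
      (forall B : matX R D,
         (B \in <<cube_family R D>>%VS) = (B \is symmetricmx) && A_like B)
    & \dim <<cube_family R D>>%VS = D.+1].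
Proof.
have Hfree : free (cube_family R D).
  apply/freeP => k Hk i.
  have Hk' : \sum_l k l *: cube_family_fun R l = 0.
    by rewrite -{2}Hk; apply: eq_bigr => l _; rewrite fam_nth.
  case: (unliftP ord0 i) => [j -> | ->].
    have := congr1 (fun N => entry N (x0 D) (flip (x0 D) j)) Hk'.
    rewrite /= fam_entry_sum entry0 flip_neq mulr0 add0r.
    transitivity (\sum_m k (lift ord0 m) * (j == m)%:R); first by rewrite sum_delta'.
    by rewrite -{2}H; apply: eq_bigr => m _; rewrite flip_idx eq_sym.
  have := congr1 (fun N => entry N (x0 D) (x0 D)) Hk'.
  rewrite /= fam_entry_sum entry0 eqxx mulr1 big1 ?addr0 // => m _.
  by rewrite flip_neq mulr0.
split => //.
- move=> B; apply/idP/idP => [/coord_span -> | /PmE PB].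
    apply/PmE; apply: big_ind; [exact: Pm0 | exact: PmD |].
    by move=> l _; apply: PmZ; rewrite fam_nth; apply: Pmfam.
  rewrite (B_repr PB); apply: memvD.
    by apply: memvZ; apply: memv_span; exact: fam_in1.
  apply: memv_suml => i _; apply: memvZ; apply: memv_span; exact: fam_inA.
- by move: Hfree; rewrite /free size_tuple => /eqP.
Qed.
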